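(* Let $f$ be a norm on $\mathbb{R}^n$ and let $\alpha\in\mathbb{R}^n$ be badly approximable, i.e. there is $D>0$ with $\max_{1\le j\le n}\min_{a_j\in\mathbb{Z}}|p\alpha_j-a_j|\ge Dp^{-1/n}$ for all $p\in\mathbb{N}$. Then there exists $h^*=h^*(f,\alpha)\in\mathbb{N}$ such that $$f(\xi_{\nu+h^*})<\tfrac12 f(\xi_\nu)\quad\text{for all }\nu\ge1,$$ where $(p_\nu,a_\nu)$ is the $\nu$-th $f$-best simultaneous approximation to $\alpha$ and $\xi_\nu=\alpha p_\nu-a_\nu$.
   Context: A norm $f$ here is a continuous function $\mathbb{R}^n\to\mathbb{R}_+$ with $f(x)=0\iff x=0$, $f(-x)=f(x)$, $f(tx)=tf(x)$ for $t\ge0$, and convex unit ball $B_f^1=\{y:f(y)\le1\}$ with $0$ in its interior. For $\alpha\in\mathbb{R}^n$, an $f$-best simultaneous approximation is an integer point $\tau=(p,a_1,\dots,a_n)\in\mathbb{Z}^{n+1}$ with $p\ge1$ such that $f(\alpha q-b)>f(\alpha p-a)$ for all $(q,b)\in\mathbb{Z}^{n+1}$ with $1\le q\le p-1$ and for all $(p,b)$ with $b\ne a$. They form a sequence $(p_\nu,a_\nu)$ with $p_1<p_2<\dots$. *)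

(* Defs.v *)
From HB Require Import structures.
From mathcomp Require Import all_boot all_order all_algebra.
From mathcomp Require Import all_classical all_reals all_analysis.
Set Implicit Arguments. Unset Strict Implicit. Unset Printing Implicit Defensive.
Import Order.TTheory GRing.Theory Num.Theory.
Import numFieldNormedType.Exports.
Local Open Scope ring_scope.

Section Defs.
Variables (R : realType) (n : nat).

Definition is_norm (f : 'rV[R]_n -> R) : Prop :=
  continuous f /\
  (forall x, 0 <= f x) /\
  (forall x, f x = 0 <-> x = 0) /\
  (forall x, f (- x) = f x) /\
  (forall (t : R) x, 0 <= t -> f (t *: x) = t * f x) /\
  (forall x y (t : R), f x <= 1 -> f y <= 1 -> 0 <= t -> t <= 1 ->
      f (t *: x + (1 - t) *: y) <= 1) /\
  (exists2 e : R, 0 < e & forall y : 'rV[R]_n, `|y| < e -> f y <= 1).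

Definition intv (a : 'rV[int]_n) : 'rV[R]_n := map_mx (fun z : int => z%:~R) a.

Definition xi (alpha : 'rV[R]_n) (p : nat) (a : 'rV[int]_n) : 'rV[R]_n :=
  p%:R *: alpha - intv a.

(* alpha badly approximable: exists D > 0 such that for every p in N (p >= 1),
   max_j min_{a_j in Z} |p alpha_j - a_j| >= D p^(-1/n); written out as:
   for every integer vector a some coordinate j has |p alpha_j - a_j| >= D p^(-1/n). *)
Definition badly_approximable (alpha : 'rV[R]_n) : Prop :=
  exists2 D : R, 0 < D & forall p : nat, (0 < p)%N ->
    forall a : 'rV[int]_n, exists j : 'I_n,
      D * (p%:R `^ (- (n%:R)^-1)) <= `|p%:R * alpha 0 j - (a 0 j)%:~R|.

Definition best_approx (f : 'rV[R]_n -> R) (alpha : 'rV[R]_n)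
    (p : nat) (a : 'rV[int]_n) : Prop :=
  [/\ (1 <= p)%N,
      (forall (q : nat) (b : 'rV[int]_n), ((1 <= q) && (q <= p.-1))%N ->
          f (xi alpha p a) < f (xi alpha q b)) &
      (forall b : 'rV[int]_n, b <> a -> f (xi alpha p a) < f (xi alpha p b))].

(* (P k, A k)_{k : nat} is the sequence of all f-best approximations, listed
   with strictly increasing denominators; index k corresponds to nu = k + 1. *)
Definition best_seq (f : 'rV[R]_n -> R) (alpha : 'rV[R]_n)
    (P : nat -> nat) (A : nat -> 'rV[int]_n) : Prop :=
  [/\ (forall k, (P k < P k.+1)%N),
      (forall k, best_approx f alpha (P k) (A k)) &
      (forall p a, best_approx f alpha p a -> exists k, P k = p /\ A k = a)].

End Defs.

(* Main.v *)
Require Import Defs.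
From HB Require Import structures.
From mathcomp Require Import all_boot all_order all_algebra.
From mathcomp Require Import all_classical all_reals all_analysis.
From mathcomp Require Import ring lra zify.
Import Order.TTheory GRing.Theory Num.Theory.
Import numFieldNormedType.Exports.
Local Open Scope ring_scope.

Section NormFacts.
Variables (R : realType) (n : nat) (f : 'rV[R]_n -> R).
Hypothesis hf : is_norm f.

Lemma f_ge0 x : 0 <= f x.
Proof. by case: hf => _ [h _]. Qed.

Lemma f_eq0 x : f x = 0 <-> x = 0.
Proof. by case: hf => _ [_ [h _]]. Qed.

Lemma f0 : f 0 = 0.
Proof. by apply/f_eq0. Qed.

Lemma fN x : f (- x) = f x.
Proof. by case: hf => _ [_ [_ [h _]]]. Qed.

Lemma fZp t x : 0 <= t -> f (t *: x) = t * f x.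
Proof. by case: hf => _ [_ [_ [_ [h _]]]]; exact: h. Qed.

Lemma fZ t x : f (t *: x) = `|t| * f x.
Proof.
have [t0|t0] := lerP 0 t; first by rewrite ger0_norm // fZp.
by rewrite -(fN (t *: x)) -scaleNr fZp ?ltr0_norm // oppr_ge0 ltW.
Qed.

Lemma fconv x y t : f x <= 1 -> f y <= 1 -> 0 <= t -> t <= 1 ->
  f (t *: x + (1 - t) *: y) <= 1.
Proof. by case: hf => _ [_ [_ [_ [_ [h _]]]]]; exact: h. Qed.

Lemma f_tri x y : f (x + y) <= f x + f y.
Proof.
have [x0|xn0] := eqVneq x 0; first by rewrite x0 add0r f0 add0r.
have [y0|yn0] := eqVneq y 0; first by rewrite y0 addr0 f0 addr0.
have sp : 0 < f x by rewrite lt_def f_ge0 andbT; apply/eqP => /f_eq0; apply/eqP.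
have tp : 0 < f y by rewrite lt_def f_ge0 andbT; apply/eqP => /f_eq0; apply/eqP.
set s := f x in sp *; set t := f y in tp *.
have st : 0 < s + t by rewrite addr_gt0.
have hx : f (s^-1 *: x) <= 1.
  rewrite fZp; last by rewrite invr_ge0 ltW.
  by rewrite mulVf // gt_eqF.
have hy : f (t^-1 *: y) <= 1.
  rewrite fZp; last by rewrite invr_ge0 ltW.
  by rewrite mulVf // gt_eqF.
have l1 : 0 <= s / (s + t) by rewrite divr_ge0 // ltW.
have l2 : s / (s + t) <= 1 by rewrite ler_pdivrMr // mul1r lerDl ltW.
have := @fconv _ _ _ hx hy l1 l2.
have -> : s / (s + t) *: (s^-1 *: x) + (1 - s / (s + t)) *: (t^-1 *: y)
   = (s + t)^-1 *: (x + y).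
  rewrite !scalerA scalerDr; congr (_ *: _ + _ *: _).
    by field; rewrite !gt_eqF.
  by field; rewrite !gt_eqF.
rewrite fZp; last by rewrite invr_ge0 ltW.
by rewrite mulrC ler_pdivrMr // mul1r.
Qed.

Lemma f_upper : exists2 C : R, 0 < C & forall x, f x <= C * `|x|.
Proof.
case: hf => _ [_ [_ [_ [_ [_ [e e0 he]]]]]].
exists (2 / e); first by rewrite divr_gt0.
move=> x; have [->|xn0] := eqVneq x 0; first by rewrite f0 normr0 mulr0.
have k0 : 0 < `|x| by rewrite normr_gt0.
have c0 : 0 <= e / (2 * `|x|) by rewrite divr_ge0 ?mulr_ge0 ?ltW.
have := he ((e / (2 * `|x|)) *: x).
rewrite fZp // mx_normZ ger0_norm //.
have -> : e / (2 * `|x|) * `|x| = e / 2 by field; rewrite gt_eqF.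
have -> : e / 2 < e by rewrite ltr_pdivrMr // ltr_pMr // ltr1n.
move=> /(_ isT).
have -> : e / (2 * `|x|) * f x = (f x / (2 / e * `|x|)) by field; rewrite !gt_eqF.
by rewrite ler_pdivrMr ?mulr_gt0 ?divr_gt0 ?invr_gt0 // ?mul1r.
Qed.


Lemma f_lower : (0 < n)%N -> exists2 c : R, 0 < c & forall x, c * `|x| <= f x.
Proof.
move=> n0.
have fc : continuous f by case: hf.
pose A := [set x : 'rV[R]_n | `|x| = 1]%classic.
have An : (A !=set0)%classic.
  pose x1 : 'rV[R]_n := \row_(j < n) (1:R).
  have x1n : x1 != 0.
    apply/eqP => /matrixP /(_ ord0 (Ordinal n0)); rewrite !mxE => /eqP.
    by rewrite oner_eq0.
  have k0 : 0 < `|x1| by rewrite normr_gt0.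
  exists (`|x1|^-1 *: x1); rewrite /A /= mx_normZ ger0_norm ?invr_ge0 ?ltW //.
  by rewrite mulVf // gt_eqF.
have Ac : compact A.
  apply: bounded_closed_compact.
    exists 1; split; first by rewrite realE ler01.
    by move=> M M1 y /= ->; rewrite ltW.
  apply: (@preimage_closed _ R (fun x : 'rV[R]_n => `|x|) [set x | x = 1]%classic); last exact: closed_eq.
  by move=> x _; apply: norm_continuous.
have [x0 x0A minf] := EVT_min_rV An Ac (continuous_subspaceT fc).
have nx0 : `|x0| = 1 by move: x0A; rewrite inE.
have cp : 0 < f x0.
  rewrite lt_def f_ge0 andbT; apply/eqP => /f_eq0 h.
  by move: nx0; rewrite h normr0 => /eqP; rewrite eq_sym oner_eq0.
exists (f x0) => // x.
have [->|xn0] := eqVneq x 0; first by rewrite normr0 mulr0 f0.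
have k0 : 0 < `|x| by rewrite normr_gt0.
have uA : (`|x|^-1 *: x) \in A.
  by rewrite inE /A /= mx_normZ ger0_norm ?invr_ge0 ?ltW // mulVf // gt_eqF.
have := minf _ uA; rewrite fZp; last by rewrite invr_ge0 ltW.
by move=> h; rewrite -ler_pdivlMr // mulrC.
Qed.

Lemma entry_le (x : 'rV[R]_n) j : `|x ord0 j| <= `|x|.
Proof.
have /mapP[k Hk ->] : `|x ord0 j| \in [seq `|x i.1 i.2| | i : 'I_1 * 'I_n].
  by apply/mapP; exists (ord0, j) => //=; rewrite mem_enum.
have -> : `|x| = mx_norm x by [].
by rewrite mx_normrE; apply/bigmax_geP; right => /=; exists k.
Qed.

Lemma norm_lt_entries (x : 'rV[R]_n) d : 0 < d -> (forall j, `|x ord0 j| < d) -> `|x| < d.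
Proof.
move=> d0 h.
have [e0|ne] := eqVneq (mx_norm x) 0.
  by have -> : `|x| = mx_norm x by []; rewrite e0.
have [[i j] hij] := mx_norm_neq0 ne.
have -> : `|x| = mx_norm x by [].
rewrite hij /=.
by rewrite (ord1 i); apply: h.
Qed.

End NormFacts.
Arguments f_upper {R n f}. Arguments f_lower {R n f}. Arguments f_ge0 {R n f}.

Lemma packing (R : realType) (n N M : nat) (y : 'I_N -> 'rV[R]_n) (B d : R) :
  0 < d -> (forall i, `|y i| <= B) -> 2 * B < d * M%:R ->
  (forall i j, i != j -> d <= `|y i - y j|) -> (N <= M ^ n)%N.
Proof.
move=> d0 hB hM hsep.
pose u i j := (y i ord0 j + B) / d.
have u0 i j : 0 <= u i j.
  apply: divr_ge0; last exact: ltW.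
  have := le_trans (@entry_le _ _ (y i) j) (hB i).
  by rewrite ler_norml => /andP[h _]; lra.
have uM i j : (Num.trunc (u i j) < M)%N.
  rewrite truncn_lt_nat //.
  have := le_trans (@entry_le _ _ (y i) j) (hB i).
  rewrite ler_norml => /andP[_ h].
  rewrite /u ltr_pdivrMr //.
  lra.
pose g i : {ffun 'I_n -> 'I_M} := [ffun j => Ordinal (uM i j)].
have ginj : injective g.
  move=> i i' /ffunP hg; apply/eqP; apply/negPn/negP => hne.
  have := hsep _ _ hne; apply/negP; rewrite -ltNge.
  apply: norm_lt_entries => // j.
  have := hg j; rewrite !ffunE => /(congr1 val) /= hk.
  have := truncn_itv (u0 i j); have := truncn_itv (u0 i' j).
  rewrite hk => /andP[a1 a2] /andP[b1 b2].
  have hu : `|u i j - u i' j| < 1 by rewrite ltr_norml; apply/andP; split; lra.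
  have -> : (y i - y i') ord0 j = d * (u i j - u i' j).
    by rewrite !mxE /u; field; rewrite gt_eqF.
  by rewrite normrM gtr0_norm // -[ltRHS]mulr1 ltr_pM2l.
have := leq_card g ginj.
by rewrite card_ord card_ffun !card_ord.
Qed.

Section Seq.
Variables (R : realType) (n : nat) (f : 'rV[R]_n -> R) (alpha : 'rV[R]_n).
Variables (P : nat -> nat) (A : nat -> 'rV[int]_n).
Hypothesis hs : best_seq f alpha P A.

Lemma P_lt i j : (i < j)%N -> (P i < P j)%N.
Proof.
case: hs => hinc _ _.
elim: j => // j ih; rewrite ltnS leq_eqVlt => /orP[/eqP->|/ih h]; first exact: hinc.
exact: ltn_trans h (hinc j).
Qed.

Lemma P_ge1 i : (1 <= P i)%N.
Proof. by case: hs => _ hb _; case: (hb i). Qed.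

Lemma sep j q b : (1 <= q)%N -> (q < P j)%N ->
  f (xi alpha (P j) (A j)) < f (xi alpha q b).
Proof.
move=> q1 qj; case: hs => _ hb _; case: (hb j) => _ h _.
by apply: h; rewrite q1 /= -ltnS prednK // (leq_trans _ qj).
Qed.

Lemma f_dec k : f (xi alpha (P k.+1) (A k.+1)) < f (xi alpha (P k) (A k)).
Proof. by apply: sep => //; [exact: P_ge1 | exact: P_lt]. Qed.

Lemma f_mono i j : (i <= j)%N -> f (xi alpha (P j) (A j)) <= f (xi alpha (P i) (A i)).
Proof.
elim: j => [|j ih]; first by rewrite leqn0 => /eqP->.
rewrite leq_eqVlt => /orP[/eqP->//|]; rewrite ltnS => /ih h.
exact: le_trans (ltW (f_dec j)) h.
Qed.

End Seq.
Arguments P_lt {R n f alpha P A}. Arguments P_ge1 {R n f alpha P A}. Arguments sep {R n f alpha P A}.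
Arguments f_dec {R n f alpha P A}. Arguments f_mono {R n f alpha P A}.

Lemma xi_sub (R : realType) (n : nat) (alpha : 'rV[R]_n) p p' a a' : (p' <= p)%N ->
  xi alpha p a - xi alpha p' a' = xi alpha (p - p') (a - a').
Proof.
move=> hp; rewrite /xi natrB // scalerBl /intv.
apply/matrixP => i j; rewrite !mxE rmorphB /=; ring.
Qed.

Theorem corollary2 (R : realType) (n : nat) (f : 'rV[R]_n -> R) (alpha : 'rV[R]_n) :
  (0 < n)%N -> is_norm f -> badly_approximable alpha ->
  exists hstar : nat,
    forall (P : nat -> nat) (A : nat -> 'rV[int]_n), best_seq f alpha P A ->
    forall nu : nat,
      f (xi alpha (P (nu + hstar)%N) (A (nu + hstar)%N)) < f (xi alpha (P nu) (A nu)) / 2.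
Proof.
move=> n0 hf _.
have [C C0 hC] := f_upper hf.
have [c c0 hc] := f_lower hf n0.
pose M := (Num.trunc (4 * C / c)).+1.
have hM : 4 * C / c < M%:R by apply: truncnS_gt.
exists (M ^ n)%N => P A hs nu.
set h := (M ^ n)%N.
set r := f (xi alpha (P nu) (A nu)).
have r0 : 0 < r.
  apply: le_lt_trans (f_dec hs nu); exact: f_ge0 hf _.
rewrite ltNge; apply/negP => hge.
pose y (i : 'I_h.+1) := xi alpha (P (nu + i)%N) (A (nu + i)%N).
have d0 : 0 < r / (2 * C) by rewrite divr_gt0 // mulr_gt0.
have hB i : `|y i| <= r / c.
  rewrite ler_pdivlMr // mulrC.
  apply: le_trans (hc _) _.
  by apply: f_mono hs _ _ _; rewrite leq_addr.
have h2 : 2 * (r / c) < r / (2 * C) * M%:R.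
  have -> : 2 * (r / c) = r / (2 * C) * (4 * C / c) by field; rewrite !gt_eqF.
  by rewrite ltr_pM2l.
have seplt (i j : 'I_h.+1) : (i < j)%N -> r / (2 * C) <= `|y j - y i|.
  move=> ij.
  have Pij : (P (nu + i) <= P (nu + j))%N by apply/ltnW/(P_lt hs); rewrite ltn_add2l.
  rewrite /y xi_sub //.
  have q1 : (1 <= P (nu + j) - P (nu + i))%N by rewrite subn_gt0 (P_lt hs) // ltn_add2l.
  have qlt : (P (nu + j) - P (nu + i) < P (nu + h))%N.
    have p1 := P_ge1 hs (nu + i).
    have pj : (P (nu + j) <= P (nu + h))%N.
      have := ltn_ord j; rewrite ltnS leq_eqVlt => /orP[/eqP->//|jh].
      by apply/ltnW/(P_lt hs); rewrite ltn_add2l.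
    lia.
  have := sep hs _ _ (A (nu + j) - A (nu + i)) q1 qlt.
  move=> hlt.
  have := le_lt_trans hge hlt => hlt2.
  have := lt_le_trans hlt2 (hC _) => hlt3.
  rewrite ler_pdivrMr ?mulr_gt0 // mulrC; apply: ltW; lra.
have hsep (i j : 'I_h.+1) : i != j -> r / (2 * C) <= `|y i - y j|.
  move=> ij; case: (ltngtP i j) => hij.
  - by rewrite distrC; apply: seplt.
  - by apply: seplt.
  - by move: ij; rewrite (val_inj hij) eqxx.
have := @packing _ _ _ _ y _ _ d0 hB h2 hsep.
by rewrite ltnn.
Qed.
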